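(* Let $0\le s<n$, $A\in M_{s+1,n-s}$ and $2\le j\le n-s$. There is a constant $K>0$ depending only on $A$ (and $n,j$) such that for all $w\in\mathcal S_{n+1,j}$: $$\max_{0\le i\le s}\ \max_{J\subset\{0,\dots,n\},\,\#J=j-1}\big|\langle(e_i+a_i)\wedge e_J,w\rangle\big|\le K\|R_Ac(w)\|$$ and $$\|R_Ac(w)\|\le K\max_{0\le i\le s}\ \max_{J\subset\{i+1,\dots,n\},\,\#J=j-1}\big|\langle(e_i+a_i)\wedge e_J,w\rangle\big|.$$
   Context: $V=\mathbb R^{n+1}$ with basis $e_0,\dots,e_n$, $V_0=\mathrm{span}(e_1,\dots,e_n)$; $e_J=e_{j_1}\wedge\dots\wedge e_{j_m}$ for $J=\{j_1<\dots<j_m\}$; $\bigwedge(V)$ carries the inner product making $\{e_J\}$ orthonormal. $\mathcal S_{n+1,j}$ is the set of $w=v_1\wedge\dots\wedge v_j$ with $v_1,\dots,v_j\in\mathbb Z^{n+1}$ linearly independent. Rows of $A$ are indexed $0,\dots,s$, columns $s+1,\dots,n$; $a_i=\sum_{k=s+1}^na_{i,k}e_k\in V$. $R_Ac(w)\in(\bigwedge^{j-1}V_0)^{s+1}$ is the vector whose $i$-th component is $\sum_{J\subset\{1,\dots,n\},\#J=j-1}\langle(e_i+a_i)\wedge e_J,w\rangle e_J$, with the Euclidean norm. *)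

(* Defs.v *)
From HB Require Import structures.
From mathcomp Require Import all_boot all_order all_algebra.
From mathcomp Require Import reals.
Set Implicit Arguments. Unset Strict Implicit. Unset Printing Implicit Defensive.
Import Order.TTheory GRing.Theory Num.Theory.
Local Open Scope ring_scope.

(* V = R^{n+1}, basis e_0..e_n indexed by 'I_(n.+1).  A multivector of /\(V) is given by its coordinates in the
   orthonormal basis (e_J)_J, J ranging over subsets of {0..n}. *)
Definition mvec (R : realType) (n : nat) := {ffun {set 'I_n.+1} -> R}.

Definition evec (R : realType) (n : nat) (l : 'I_n.+1) : 'I_n.+1 -> R :=
  fun k => (k == l)%:R.

Definition wedge (R : realType) (n m : nat) (v : 'I_m -> 'I_n.+1 -> R) : mvec R n :=
  [ffun I : {set 'I_n.+1} =>
     if #|I| == m then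
       \det (\matrix_(k < m, l < m) v k (nth ord0 (enum I) l))
     else 0].

Definition mdot (R : realType) (n : nat) (x y : mvec R n) : R :=
  \sum_(I : {set 'I_n.+1}) x I * y I.

Definition S_set (R : realType) (n j : nat) (w : mvec R n) : Prop :=
  exists v : 'I_j -> 'I_n.+1 -> R,
    (forall k l, exists z : int, v k l = z%:~R) /\
    row_free (\matrix_(k < j, l < n.+1) v k l) /\
    w = wedge v.

(* a_i = sum_{k=s+1}^n a_{i,k} e_k  (columns of A indexed s+1..n) ;
   this returns e_i + a_i. *)
Definition eplusa (R : realType) (n s : nat) (A : 'M[R]_(s.+1, n - s))
  (i : 'I_s.+1) : 'I_n.+1 -> R :=
  fun l => (val l == val i)%:R +
           (if (s < val l)%N then
              (if @insub _ (fun k => (k < n - s)%N) 'I_(n - s) (val l - s.+1)%N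
               is Some k then A i k else 0)
            else 0).

Definition fam (R : realType) (n s : nat) (A : 'M[R]_(s.+1, n - s)) (j : nat)
  (i : 'I_s.+1) (J : {set 'I_n.+1}) : 'I_j -> 'I_n.+1 -> R :=
  fun k => if val k == 0%N then eplusa A i
           else evec R (nth ord0 (enum J) (val k).-1).

Arguments fam {R n s} A j i J _ _.

Definition pair (R : realType) (n s : nat) (A : 'M[R]_(s.+1, n - s)) (j : nat)
  (i : 'I_s.+1) (J : {set 'I_n.+1}) (w : mvec R n) : R :=
  mdot (wedge (fam A j i J)) w.

(* R_A c(w) in (/\^{j-1} V_0)^{s+1}: component (i, J), J subset of {1..n},
   #J = j-1, is the e_J-coordinate of the i-th component *)
Definition RAc (R : realType) (n s : nat) (A : 'M[R]_(s.+1, n - s)) (j : nat)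
  (w : mvec R n) : {ffun 'I_s.+1 * {set 'I_n.+1} -> R} :=
  [ffun p : 'I_s.+1 * {set 'I_n.+1} => if (#|p.2| == j.-1) && (ord0 \notin p.2) then pair A j p.1 p.2 w
             else 0].

Definition RAc_norm (R : realType) (n s : nat) (A : 'M[R]_(s.+1, n - s)) (j : nat)
  (w : mvec R n) : R :=
  Num.sqrt (\sum_p (RAc A j w p) ^+ 2).

(* Main.v *)
Require Import Defs.
From HB Require Import structures.
From mathcomp Require Import all_boot all_order all_algebra.
From mathcomp Require Import perm.
From mathcomp Require Import reals.
From mathcomp Require Import ring lra zify.
Set Implicit Arguments. Unset Strict Implicit. Unset Printing Implicit Defensive.
Import Order.TTheory GRing.Theory Num.Theory.
Local Open Scope ring_scope.

Section Phi.
Variables (R : realType) (n j : nat).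

Definition Phi (w : mvec R n) (v : 'I_j -> 'I_n.+1 -> R) : R := mdot (wedge v) w.

Definition upd (v : 'I_j -> 'I_n.+1 -> R) (p : 'I_j) (x : 'I_n.+1 -> R) :=
  fun q => if q == p then x else v q.

Lemma det_upd (v : 'I_j -> 'I_n.+1 -> R) p (x : 'I_n.+1 -> R) (g : 'I_j -> 'I_n.+1) :
  \det (\matrix_(k, l) upd v p x k (g l)) =
  \sum_m x m * \det (\matrix_(k, l) upd v p (evec R m) k (g l)).
Proof.
have cofE : forall y c, cofactor (\matrix_(k, l) upd v p y k (g l)) p c =
                         cofactor (\matrix_(k, l) upd v p x k (g l)) p c.
  move=> y c; rewrite /cofactor; congr (_ * \det _); apply/matrixP=> a b.
  by rewrite !mxE /upd eq_sym (negbTE (neq_lift p a)).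
rewrite (expand_det_row _ p).
under [in RHS]eq_bigr => m _ do rewrite (expand_det_row _ p) mulr_sumr.
rewrite exchange_big /=; apply: eq_bigr => c _.
under eq_bigr => m _ do rewrite cofE mxE /upd eqxx mulrA.
rewrite -mulr_suml /= mxE /upd eqxx; congr (_ * _).
rewrite (bigD1 (g c)) //= big1 ?addr0 /evec ?eqxx ?mulr1 // => m /negbTE hm.
by rewrite eq_sym hm mulr0.
Qed.

Lemma Phi_upd w v p x :
  Phi w (upd v p x) = \sum_m x m * Phi w (upd v p (evec R m)).
Proof.
rewrite /Phi /mdot.
under [in RHS]eq_bigr => m _ do rewrite mulr_sumr.
rewrite exchange_big /=; apply: eq_bigr => I _.
under eq_bigr => m _ do rewrite ffunE.
rewrite !ffunE; case: eqP => _; last first.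
  by rewrite big1 => [|m _]; ring.
rewrite det_upd mulr_suml /=; apply: eq_bigr => m _.
by rewrite mulrA.
Qed.

Lemma Phi_alt w v (p1 p2 : 'I_j) : p1 != p2 -> v p1 = v p2 -> Phi w v = 0.
Proof.
move=> hp hv; rewrite /Phi /mdot big1 // => I _; rewrite ffunE.
case: eqP => _; last by rewrite mul0r.
by rewrite (determinant_alternate hp) ?mul0r // => l; rewrite !mxE hv.
Qed.

Lemma Phi_perm w v (sg : 'S_j) :
  Phi w (fun k => v (sg k)) = (-1) ^+ sg * Phi w v.
Proof.
rewrite /Phi /mdot mulr_sumr; apply: eq_bigr => I _; rewrite !ffunE.
case: eqP => _; last by rewrite !mul0r mulr0.
have -> : (\matrix_(k, l) v (sg k) (nth ord0 (enum I) l) : 'M[R]_j) =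
          row_perm sg (\matrix_(k, l) v k (nth ord0 (enum I) l)).
  by apply/matrixP=> a b; rewrite !mxE.
by rewrite row_permE det_mulmx det_perm mulrA.
Qed.

End Phi.

Lemma Phi_ext (R : realType) (n j : nat) w (v v' : 'I_j -> 'I_n.+1 -> R) :
  (forall k l, v k l = v' k l) -> Phi w v = Phi w v'.
Proof.
move=> h; rewrite /Phi /mdot; apply: eq_bigr => I _; rewrite !ffunE.
case: eqP => // _; congr (\det _ * _); apply/matrixP => a b; by rewrite !mxE h.
Qed.

Section Main.
Variables (R : realType) (n s : nat) (A : 'M[R]_(s.+1, n - s)) (j : nat).

Definition famt (i : 'I_s.+1) (t : nat -> 'I_n.+1) : 'I_j -> 'I_n.+1 -> R :=
  fun k => if val k == 0%N then eplusa A i else evec R (t (val k).-1).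

Lemma pairE i J w : pair A j i J w = Phi w (famt i (nth ord0 (enum J))).
Proof. by []. Qed.

Definition av (i : 'I_s.+1) (l : 'I_n.+1) : R := eplusa A i l - (val l == val i)%:R.

Lemma av0 i (l : 'I_n.+1) : (val l <= s)%N -> av i l = 0.
Proof.
move=> h; rewrite /av /eplusa.
have -> : (s < val l)%N = false by apply/negbTE; rewrite -leqNgt.
by rewrite addr0 subrr.
Qed.

Definition T (w : mvec R n) : R :=
  \big[Num.max/0]_(i < s.+1)
     \big[Num.max/0]_(J : {set 'I_n.+1} |
           (#|J| == j.-1) && [forall l in J, (val i < val l)%N])
        `|pair A j i J w|.

Lemma T_ge0 w : 0 <= T w.
Proof.
rewrite /T; elim/big_ind: _ => //.
  by move=> x y hx hy; rewrite le_max hx.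
move=> i _; elim/big_ind: _ => //.
  by move=> x y hx hy; rewrite le_max hx.
Qed.

Definition good (f : mvec R n -> R) := exists C : R, forall w, `|f w| <= C * T w.

Lemma good0 : good (fun _ => 0).
Proof. by exists 0 => w; rewrite normr0 mul0r. Qed.

Lemma good_eq f g : (forall w, f w = g w) -> good g -> good f.
Proof. by move=> h [C hC]; exists C => w; rewrite h. Qed.

Lemma goodD f g : good f -> good g -> good (fun w => f w + g w).
Proof.
move=> [C hC] [D hD]; exists (C + D) => w.
by rewrite (le_trans (ler_normD _ _)) // mulrDl lerD.
Qed.

Lemma goodN f : good f -> good (fun w => - f w).
Proof. by move=> [C hC]; exists C => w; rewrite normrN. Qed.

Lemma goodZ c f : good f -> good (fun w => c * f w).
Proof.
move=> [C hC]; exists (`|c| * C) => w.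
by rewrite normrM -mulrA ler_wpM2l.
Qed.

Lemma good_sum (I : finType) (f : I -> mvec R n -> R) :
  (forall x, good (f x)) -> good (fun w => \sum_x f x w).
Proof.
move=> h; have [C hC] := fin_all_exists h.
exists (\sum_x C x) => w; rewrite mulr_suml.
by rewrite (le_trans (ler_norm_sum _ _ _)) // ler_sum.
Qed.

End Main.

Section Core.
Variables (R : realType) (n s : nat) (A : 'M[R]_(s.+1, n - s)) (j : nat).
Hypothesis hs : (s < n)%N.

Local Notation famt := (@famt R n s A j).
Local Notation good := (@good R n s A j).

Definition bad (i : 'I_s.+1) (t : nat -> 'I_n.+1) : nat :=
  \sum_(k < j.-1) (val (t k) <= val i)%N.

Definition updt (t : nat -> 'I_n.+1) (k0 : nat) (l : 'I_n.+1) :=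
  fun m => if m == k0 then l else t m.

Lemma bad_upd (i i' : 'I_s.+1) (t : nat -> 'I_n.+1) (k0 : 'I_j.-1) (l : 'I_n.+1) :
  (val i' <= val i)%N -> (val (t k0) <= val i)%N -> (val i' < val l)%N ->
  (bad i' (updt t k0 l) < bad i t)%N.
Proof.
move=> h1 h2 h3; rewrite /bad (bigD1 k0) //= [X in (_ < X)%N](bigD1 k0) //=.
have h4 : (val l <= val i')%N = false by apply/negbTE; rewrite -ltnNge.
rewrite /updt eqxx h2 /= h4 add0n add1n ltnS.
apply: leq_sum => k hk.
have -> : (val k == val k0) = false by apply/negbTE; exact: hk.
case h5: (val (t k) <= val i')%N => //=.
by rewrite (leq_trans h5 h1).
Qed.

Lemma good_target (i : 'I_s.+1) (J : {set 'I_n.+1}) :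
  #|J| = j.-1 -> (forall l, l \in J -> (val i < val l)%N) ->
  good (fun w => pair A j i J w).
Proof.
move=> hc hl; exists 1 => w; rewrite mul1r /T.
apply: le_trans (le_bigmax _ _ i).
apply: (le_bigmax_cond _ (P := fun J : {set 'I_n.+1} => (#|J| == j.-1) && [forall l in J, (val i < val l)%N])).
by rewrite hc eqxx /=; apply/forall_inP.
Qed.

End Core.

Section Base.
Variables (R : realType) (n s : nat) (A : 'M[R]_(s.+1, n - s)) (j : nat).

Local Notation famt := (@famt R n s A j).
Local Notation good := (@good R n s A j).

Lemma good_base (i : 'I_s.+1) (t : nat -> 'I_n.+1) :
  (0 < j)%N -> (forall k : 'I_j.-1, (val i < val (t k))%N) ->
  good (fun w => Phi w (famt i t)).
Proof.
move=> j0 ht.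
have hsucc : forall a : 'I_j.-1, (a.+1 < j)%N by move=> a; have := ltn_ord a; lia.
case: (boolP [exists a : 'I_j.-1, exists b : 'I_j.-1, (a != b) && (t a == t b)]).
  move/existsP=> [a /existsP [b /andP [hab /eqP htab]]].
  apply: (good_eq (g := fun _ => 0)); last exact: good0.
  move=> w; apply: (@Phi_alt _ _ _ w _ (Ordinal (hsucc a)) (Ordinal (hsucc b))).
    by apply: contra hab => /eqP [] hab; apply/eqP/val_inj.
  by rewrite /famt /= htab.
move=> hninj.
have tinj : injective (fun k : 'I_j.-1 => t k).
  move=> a b hab; apply/eqP; apply: contraNT hninj => hab'.
  by apply/existsP; exists a; apply/existsP; exists b; rewrite hab' /= hab.
pose S := [set t (val k) | k : 'I_j.-1].
have cS : #|S| = j.-1 by rewrite card_imset // card_ord.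
have memS : forall k : 'I_j, val k != 0%N -> t (val k).-1 \in enum S.
  move=> k hk; rewrite mem_enum.
  have hk' : ((val k).-1 < j.-1)%N.
    by have := ltn_ord k; move: hk; rewrite /=; lia.
  by apply/imsetP; exists (Ordinal hk').
pose g (k : 'I_j) : nat := if val k == 0%N then 0%N else (index (t (val k).-1) (enum S)).+1.
have gj : forall k, (g k < j)%N.
  move=> k; rewrite /g; case: eqP => [_|/eqP hk]; first done.
  have := memS k hk; rewrite -index_mem -cardE cS; lia.
pose sf (k : 'I_j) : 'I_j := Ordinal (gj k).
have sf_inj : injective sf.
  move=> a b /(congr1 val) /=; rewrite /g.
  case: eqP => [ha|/eqP ha]; case: eqP => [hb|/eqP hb] //.
    by move=> _; apply: val_inj; rewrite ha hb.
  move=> [] hi.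
  have : nth ord0 (enum S) (index (t (val a).-1) (enum S)) =
         nth ord0 (enum S) (index (t (val b).-1) (enum S)) by rewrite hi.
  rewrite !nth_index ?memS // => htab.
  have ha' : ((val a).-1 < j.-1)%N by have := ltn_ord a; move: ha; rewrite /=; lia.
  have hb' : ((val b).-1 < j.-1)%N by have := ltn_ord b; move: hb; rewrite /=; lia.
  move: (tinj (Ordinal ha') (Ordinal hb') htab) => /(congr1 val) /= h.
  by apply: val_inj; move: h ha hb; rewrite /=; lia.
pose sg := perm sf_inj.
have hfam : forall k l, famt i t k l = famt i (nth ord0 (enum S)) (sg k) l.
  move=> k l; rewrite /famt permE /= /g.
  case hk: (val k == 0%N) => //=.
  by rewrite nth_index // memS // hk.
apply: (good_eq (g := fun w => (-1) ^+ sg * pair A j i S w)).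
  by move=> w; rewrite pairE -Phi_perm; apply: Phi_ext => k l; exact: hfam.
apply: goodZ; apply: good_target => // l /imsetP [k _ ->]; exact: ht.
Qed.
End Base.

Section Ind.
Variables (R : realType) (n s : nat) (A : 'M[R]_(s.+1, n - s)) (j : nat).

Local Notation famt := (@famt R n s A j).
Local Notation good := (@good R n s A j).
Local Notation bad := (@bad n s j).

Lemma eplusa0 (i : 'I_s.+1) (l : 'I_n.+1) :
  (val l != val i) -> (val l <= s)%N -> eplusa A i l = 0.
Proof.
move=> /negbTE h1 h2; rewrite /eplusa h1.
have -> : (s < val l)%N = false by apply/negbTE; rewrite -leqNgt.
by rewrite addr0.
Qed.

Lemma eplusaE (i : 'I_s.+1) (l : 'I_n.+1) :
  eplusa A i l = (val l == val i)%:R + av A i l.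
Proof. by rewrite /av addrC subrK. Qed.

Lemma good_all : (0 < j)%N -> forall b i t, (bad i t <= b)%N -> good (fun w => Phi w (famt i t)).
Proof.
move=> j0; elim=> [|b IH] i t hb.
  apply: good_base => // k; move: hb; rewrite leqn0 /bad (bigD1 k) //=.
  by case: leqP.
case: (boolP [exists k : 'I_j.-1, (val (t k) <= val i)%N]); last first.
  move=> hn; apply: IH; rewrite /bad big1 // => k _.
  case: leqP => // hk; exfalso; move/negP: hn; apply; apply/existsP; exists k.
  done.
move/existsP=> [k0 h2].
have hp : (k0.+1 < j)%N by have := ltn_ord k0; lia.
pose p : 'I_j := Ordinal hp.
pose o : 'I_j := Ordinal j0.
have op : o != p by [].
pose m := t k0.
have hm : (val m < s.+1)%N by exact: leq_ltn_trans h2 (ltn_ord i).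
pose m' : 'I_s.+1 := Ordinal hm.
have Xe : forall (i' : 'I_s.+1) l w,
    Phi w (upd (famt i' t) p (evec R l)) = Phi w (famt i' (updt t k0 l)).
  move=> i' l w; apply: Phi_ext => k l'; rewrite /upd /famt /updt.
  case: eqP => [->|/eqP hk]; first by rewrite /= eqxx.
  case hk0: (val k == 0%N) => //=.
  case: eqP => // hk1; exfalso; move/eqP: hk; apply; apply: val_inj => /=.
  move/negbT: hk0 hk1; rewrite /=; lia.
have e1 : forall w, Phi w (famt i t) =
    Phi w (upd (famt i t) p (eplusa A m')) - \sum_l av A m' l * Phi w (upd (famt i t) p (evec R l)).
  move=> w; rewrite Phi_upd.
  under eq_bigr => l _ do rewrite eplusaE mulrDl.
  rewrite big_split /= addrK (bigD1 m) //= eqxx mul1r big1 ?addr0.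
    by apply: Phi_ext => k l; rewrite /upd; case: eqP => // ->.
  move=> l hl; have -> : (val l == val m) = false by apply/negbTE; exact: hl.
  by rewrite mul0r.
apply: (good_eq e1); apply: goodD; last first.
  apply: goodN; apply: good_sum => l.
  case: (leqP (val l) s) => hl.
    by apply: (good_eq (g := fun _ => 0)); [move=> w; rewrite av0 // mul0r | exact: good0].
  apply: goodZ; apply: (good_eq (Xe i l)); apply: IH.
  rewrite -ltnS; apply: leq_trans hb; apply: (bad_upd (i := i) (i' := i)) => //.
  exact: leq_trans (ltn_ord i) hl.
case: (eqVneq (val m) (val i)) => hmi.
  have -> : m' = i by apply: val_inj.
  apply: (good_eq (g := fun _ => 0)); last exact: good0.
  move=> w; apply: (@Phi_alt _ _ _ w _ o p op).
  by rewrite /upd eqxx (negbTE op) /famt.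
have hmi' : (val m' < val i)%N by rewrite ltn_neqAle hmi h2.
have e2 : forall w, Phi w (upd (famt i t) p (eplusa A m')) =
    - \sum_l eplusa A i l * Phi w (famt m' (updt t k0 l)).
  move=> w; under eq_bigr => l _ do rewrite -Xe.
  rewrite -Phi_upd.
  rewrite (@Phi_ext _ _ _ w (upd (famt m' t) p (eplusa A i))
             (fun k => upd (famt i t) p (eplusa A m') (tperm o p k))).
    by rewrite Phi_perm odd_tperm op expr1 mulN1r opprK.
  move=> k l; case: (eqVneq k o) => [->|ko].
    by rewrite tpermL /upd eqxx (negbTE op).
  case: (eqVneq k p) => [->|kp].
    by rewrite tpermR /upd eqxx (negbTE op).
  rewrite tpermD 1?eq_sym // /upd (negbTE kp) /famt.
  have -> : (val k == 0%N) = false.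
    by apply/negbTE; apply: contra ko => /eqP hk; apply/eqP/val_inj.
  by [].
apply: (good_eq e2); apply: goodN; apply: good_sum => l.
case: (eqVneq (eplusa A i l) 0) => he.
  by apply: (good_eq (g := fun _ => 0)); [move=> w; rewrite he mul0r | exact: good0].
apply: goodZ; apply: IH.
have hl : (val m' < val l)%N.
  case: (eqVneq (val l) (val i)) => [->//|hli].
  case: (leqP (val l) s) => hls; first by rewrite eplusa0 ?eqxx in he.
  exact: leq_trans (ltn_ord m') hls.
rewrite -ltnS; apply: leq_trans hb; apply: (bad_upd (i := i) (i' := m')) => //.
Qed.
End Ind.

Lemma sq_le_sum (R : realType) (I : finType) (x : I -> R) (p : I) :
  `|x p| <= Num.sqrt (\sum_q x q ^+ 2).
Proof.
rewrite -sqrtr_sqr ler_sqrt; last by rewrite sumr_ge0 // => q _; rewrite sqr_ge0.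
rewrite (bigD1 p) //= lerDl sumr_ge0 // => q _; exact: sqr_ge0.
Qed.

Lemma sqrt_sum_le (R : realType) (I : finType) (x : I -> R) :
  Num.sqrt (\sum_q x q ^+ 2) <= \sum_q `|x q|.
Proof.
have h0 : 0 <= \sum_q `|x q| by rewrite sumr_ge0.
rewrite -(ger0_norm h0) -sqrtr_sqr ler_sqrt ?sqr_ge0 //.
rewrite expr2 mulr_suml; apply: ler_sum => q _.
rewrite -[x q ^+ 2]ger0_norm ?sqr_ge0 // normrX expr2 ler_wpM2l //.
by rewrite (bigD1 q) //= lerDl sumr_ge0.
Qed.

Theorem lemma5p5 (R : realType) (n s : nat) (A : 'M[R]_(s.+1, n - s)) (j : nat)
  (hs : (s < n)%N) (hj2 : (2 <= j)%N) (hj : (j <= n - s)%N) :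
  exists K : R, 0 < K /\
    forall w : mvec R n, S_set j w ->
      (\big[Num.max/0]_(i < s.+1)
         \big[Num.max/0]_(J : {set 'I_n.+1} | #|J| == j.-1)
           `|pair A j i J w| <= K * RAc_norm A j w)
      /\
      (RAc_norm A j w <=
         K * \big[Num.max/0]_(i < s.+1)
               \big[Num.max/0]_(J : {set 'I_n.+1} |
                   (#|J| == j.-1) && [forall l in J, (val i < val l)%N])
                 `|pair A j i J w|).
Proof.
have j0 : (0 < j)%N by rewrite (leq_trans _ hj2).
have gp : forall x : 'I_s.+1 * {set 'I_n.+1}, good A j (fun w => pair A j x.1 x.2 w).
  move=> x; apply: (@good_eq R n s A j _ (fun w => Phi w (@famt R n s A j x.1 (nth ord0 (enum x.2))))).
    by move=> w; rewrite pairE.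
  exact: (good_all A j0 (leqnn _)).
have [C hC] := fin_all_exists gp.
pose K0 := 1 + \sum_x `|C x|.
have K0pos : 0 < K0 by rewrite ltr_pwDl // sumr_ge0.
have hK0 : forall x w, `|pair A j x.1 x.2 w| <= K0 * T A j w.
  move=> x w; apply: le_trans (hC x w) _; apply: ler_wpM2r; first exact: T_ge0.
  apply: le_trans (ler_norm _) _; rewrite /K0 (bigD1 x) //= addrCA lerDl.
  by rewrite addr_ge0 // sumr_ge0.
pose N : R := #|{: 'I_s.+1 * {set 'I_n.+1}}|%:R + 1.
have N1 : 1 <= N by rewrite lerDr.
exists (K0 * N); split; first by rewrite mulr_gt0 // (lt_le_trans ltr01).
move=> w _.
have nrm0 : 0 <= RAc_norm A j w by rewrite sqrtr_ge0.
have hT : T A j w <= RAc_norm A j w.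
  rewrite /T; apply: bigmax_le => // i _; apply: bigmax_le => // J /andP [hc /forall_inP hl].
  have -> : pair A j i J w = RAc A j w (i, J).
    rewrite ffunE /= hc /=; case: ifP => // /negbFE h0.
    by have := hl _ h0.
  exact: sq_le_sum.
split.
  have KN0 : 0 <= K0 * N by apply: mulr_ge0; lra.
  apply: bigmax_le => [|i _]; first exact: mulr_ge0.
  apply: bigmax_le => [|J _]; first exact: mulr_ge0.
  apply: le_trans (hK0 (i, J) w) _.
  rewrite -mulrA; apply: ler_wpM2l; first exact: ltW.
  apply: le_trans hT _; rewrite ler_peMl //.
apply: le_trans (sqrt_sum_le _) _.
apply: (@le_trans _ _ (\sum_(x : 'I_s.+1 * {set 'I_n.+1}) K0 * T A j w)).
  apply: ler_sum => x _; rewrite ffunE; case: ifP => _; last by rewrite normr0 mulr_ge0 ?T_ge0 ?ltW.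
  exact: hK0.
rewrite sumr_const -mulr_natl mulrCA -[K0 * N * _]mulrA; apply: ler_wpM2l; first exact: ltW.
apply: ler_wpM2r; first exact: T_ge0.
by rewrite /N lerDl.
Qed.
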